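(* Let $B_k$ ($k\ge2$) be a generalized Bethe tree with parameters $n_1,\dots,n_k$ and $d_1,\dots,d_k$, let $\alpha\in[0,1)$ and $\beta=1-\alpha$. Let $T_k$ be the $k\times k$ symmetric tridiagonal matrix with diagonal entries $\alpha,\ \alpha d_2,\ \dots,\ \alpha d_k$, with $(s-1,s)$ and $(s,s-1)$ entries $\beta\sqrt{d_s-1}$ for $s=2,\dots,k-1$, and with $(k-1,k)$ and $(k,k-1)$ entries $\beta\sqrt{d_k}$; let $T_j$ be its $j\times j$ leading principal submatrix ($j=1,\dots,k$). Then: (1) as a multiset, the spectrum of $A_\alpha(B_k)$ is obtained by taking each eigenvalue of $T_j$ with multiplicity $n_j-n_{j+1}$ for $1\le j\le k-1$, and each eigenvalue of $T_k$ with multiplicity $1$, and forming the multiset union (multiplicities of equal eigenvalues arising from different $T_j$ being added); (2) the largest eigenvalue of $T_k$ equals the largest eigenvalue of $A_\alpha(B_k)$.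
   Context: For a graph $G$, $A(G)$ is the adjacency matrix, $D(G)$ the diagonal degree matrix, and $A_\alpha(G)=\alpha D(G)+(1-\alpha)A(G)$. In a rooted tree, the level of a vertex is its distance to the root plus one. A generalized Bethe tree $B_k$ is a rooted tree with $k$ levels in which all vertices at the same level have the same degree. For $j\in\{1,\dots,k\}$, $n_{k-j+1}$ denotes the number of vertices at level $j$ and $d_{k-j+1}$ their common degree (so index $1$ refers to the deepest level and index $k$ to the root; $d_1=1$, $n_k=1$). *)

(* Defs.v *)
(* Real numbers are modelled by an arbitrary real closed
   field R : rcfType (needed for square roots Num.sqrt). *)
From HB Require Import structures.
From mathcomp Require Import all_boot all_order all_algebra.
Set Implicit Arguments. Unset Strict Implicit. Unset Printing Implicit Defensive.
Import Order.TTheory GRing.Theory Num.Theory.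
Local Open Scope ring_scope.

(* A rooted tree with root r is encoded by a parent map p : p r = r and every
   vertex reaches r by iterating p.  The (simple, undirected) graph is the one
   whose edges are the pairs {x, p x}, x <> r. *)
Definition is_rooted_tree (N : nat) (p : 'I_N -> 'I_N) (r : 'I_N) : Prop :=
  p r = r /\ forall x : 'I_N, exists m : nat, iter m p x = r.

Definition tadj (N : nat) (p : 'I_N -> 'I_N) (x y : 'I_N) : bool :=
  (x != y) && ((p x == y) || (p y == x)).

Definition tdeg (N : nat) (p : 'I_N -> 'I_N) (x : 'I_N) : nat :=
  #|[set y | tadj p x y]|.

(* distance to the root = least m with p^m(x) = r (such an m is < N in a
   rooted tree).  The level of x (as in the paper) is tdepth x + 1. *)
Definition tdepth (N : nat) (p : 'I_N -> 'I_N) (r x : 'I_N) : nat :=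
  find (fun m => iter m p x == r) (iota 0 N).

Definition adjmx (R : nzRingType) (N : nat) (p : 'I_N -> 'I_N) : 'M[R]_N :=
  \matrix_(i, j) (tadj p i j)%:R.

Definition degmx (R : nzRingType) (N : nat) (p : 'I_N -> 'I_N) : 'M[R]_N :=
  \matrix_(i, j) ((i == j)%:R * (tdeg p i)%:R).

Definition Aalpha (R : nzRingType) (N : nat) (p : 'I_N -> 'I_N) (alpha : R)
  : 'M[R]_N := alpha *: degmx R p + (1 - alpha) *: adjmx R p.

(* Entries of the k x k tridiagonal matrix T_k, with 0-based indices a b.
   In 1-based indices: diagonal (1,1) = alpha, (s,s) = alpha d_s for s >= 2;
   (s-1,s),(s,s-1) = beta sqrt(d_s - 1) for 2 <= s <= k-1;
   (k-1,k),(k,k-1) = beta sqrt(d_k); other entries 0. *)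
Definition Tentry (R : rcfType) (k : nat) (d : nat -> nat) (alpha : R)
  (a b : nat) : R :=
  let beta := 1 - alpha in
  if a == b then (if a == 0%N then alpha else alpha * (d a.+1)%:R)
  else if (a == b.+1) || (b == a.+1) then
    let s := (maxn a b).+1 in
    beta * Num.sqrt (if s == k then (d k)%:R else (d s)%:R - 1)
  else 0.

Definition Tsub (R : rcfType) (k : nat) (d : nat -> nat) (alpha : R) (j : nat)
  : 'M[R]_j := \matrix_(a < j, b < j) Tentry k d alpha a b.

(* Main.v *)
Require Import Defs.
From HB Require Import structures.
From mathcomp Require Import all_boot all_order all_algebra all_fingroup.
From mathcomp Require Import ring lra zify.
From Stdlib Require Import Classical.
Set Implicit Arguments. Unset Strict Implicit. Unset Printing Implicit Defensive.
Import Order.TTheory GRing.Theory Num.Theory.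
Local Open Scope ring_scope.

Lemma poly_eq_ge (R : numDomainType) (p q : {poly R}) (C : R) :
  (forall x, C <= x -> p.[x] = q.[x]) -> p = q.
Proof.
move=> H; apply/eqP; rewrite -subr_eq0; apply/eqP.
apply: (@roots_geq_poly_eq0 _ _ [seq C + i%:R | i <- iota 0 (size (p - q))]).
- apply/allP => x /mapP [i _ ->]; rewrite /root !hornerE H ?subrr //.
  by rewrite lerDl ler0n.
- rewrite map_inj_uniq ?iota_uniq // => i j /addrI /eqP; rewrite eqr_nat => /eqP.
  done.
- by rewrite size_map size_iota.
Qed.

Lemma det_unitri (F : comNzRingType) n (K : 'M[F]_n) (f : 'I_n -> nat) :
  (forall v a, K v a != 0 -> (f v < f a)%N) -> \det (1%:M + K) = 1.
Proof.
move=> Hf; rewrite /determinant (bigD1 (1 : 'S_n)%g) //= [X in _ + X]big1.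
  rewrite addr0 odd_perm1 expr0 mul1r; apply: big1 => i _.
  rewrite perm1 !mxE eqxx mulr1n.
  have -> : K i i = 0 by apply/eqP; apply: contraT => /Hf; rewrite ltnn.
  by rewrite addr0.
move=> s sN1.
case: (pickP (fun i => s i != i)) => [i si | H]; last first.
  by case/eqP: sN1; apply/permP => i; rewrite perm1; move: (H i) => /negbFE/eqP.
case: (@arg_maxnP _ i (fun j => s j != j) f si) => j sj jmax.
rewrite (bigD1 j) //= !mxE eq_sym (negbTE sj) mulr0n add0r.
have -> : K j (s j) = 0.
  apply/eqP; apply: contraT => /Hf lt.
  have : s (s j) != s j by rewrite (inj_eq (@perm_inj _ s)).
  by move/jmax; rewrite /= leqNgt lt.
by rewrite mul0r mulr0.
Qed.

Lemma det_tree (F : fieldType) n (M : 'M[F]_n) (c : 'I_n -> 'I_n -> bool)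
  (f : 'I_n -> nat) (e rho : 'I_n -> F) :
 (forall v a, c v a -> (f v < f a)%N) ->
 (forall v w a, c v a -> c w a -> v = w) ->
 (forall v, rho v != 0) ->
 (forall v w, v != w -> M v w = (c v w)%:R * e w + (c w v)%:R * e v) ->
 (forall v, M v v = rho v + \sum_(a | c v a) e a ^+ 2 / rho a) ->
 \det M = \prod_v rho v.
Proof.
move=> Hf Hu Hr Hoff Hdiag.
have cvv v : c v v = false by apply/negP => /Hf; rewrite ltnn.
pose K : 'M[F]_n := \matrix_(v, a) ((c v a)%:R * (e a / rho a)).
pose D := diag_mx (\row_v rho v).
have HM : M = (1%:M + K) *m D *m (1%:M + K)^T.
  rewrite raddfD /= trmx1 !mulmxDl !mulmxDr !mul1mx !mulmx1.
  rewrite /D !mul_mx_diag !mul_diag_mx.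
  apply/matrixP => v w.
  rewrite !mxE.
  under eq_bigr => a _ do rewrite !mxE.
  have [<-|vw] := eqVneq v w.
    rewrite Hdiag cvv !mul0r mulr0 !addr0 mulr1n; congr (_ + _).
    rewrite add0r big_mkcond /=; apply: eq_bigr => a _.
    case: (c v a); last by rewrite !mul0r.
    by rewrite !mul1r; field.
  rewrite mulr0n add0r Hoff // [X in _ = _ + (_ + X)]big1 ?addr0.
    move: (Hr v) (Hr w); set a1 := (c v w)%:R; set a2 := (c w v)%:R => hv hw; by field; rewrite hv hw.
  move=> a _.
  case cva: (c v a); case cwa: (c w a); rewrite ?mul0r ?mulr0 //.
  by case/eqP: vw; apply: Hu cva cwa.
have HL : \det (1%:M + K) = 1.
  apply: (@det_unitri _ _ _ f) => v a; rewrite mxE.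
  by case cva: (c v a); rewrite ?mul0r ?eqxx // => _; apply: Hf.
rewrite HM !det_mulmx det_tr HL det_diag mul1r mulr1.
by apply: eq_bigr => i _; rewrite mxE.
Qed.
Local Open Scope nat_scope.
Section Tree.
Variables (N : nat) (p : 'I_N -> 'I_N) (r : 'I_N).
Hypothesis Ht : is_rooted_tree p r.
Local Notation dep := (tdepth p r).

Lemma dep_spec x : iter (dep x) p x = r /\ forall m, iter m p x = r -> dep x <= m.
Proof.
have [pr Hx] := Ht; have [m Hm] := Hx x.
have hc : fconnect p x r by rewrite -Hm fconnect_iter.
have hlt : findex p x r < N.
  apply: leq_trans (findex_max hc) _.
  by rewrite -size_orbit -(card_uniqP (orbit_uniq p x)) -[X in _ <= X]card_ord max_card.
have hh : has (fun m => iter m p x == r) (iota 0 N).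
  by apply/hasP; exists (findex p x r); rewrite ?mem_iota ?iter_findex ?eqxx.
have Flt : dep x < N by rewrite /tdepth -[X in _ < X](size_iota 0 N) -has_find.
split.
  by have := nth_find 0 hh; rewrite nth_iota // => /eqP.
move=> m' Hm'; rewrite leqNgt; apply/negP => lt.
have := before_find 0 lt; rewrite nth_iota ?Hm' ?eqxx //.
exact: ltn_trans lt Flt.
Qed.

Lemma dep_root : dep r = 0.
Proof. by have [_ H] := dep_spec r; apply/eqP; rewrite -leqn0; apply: H. Qed.

Lemma dep_eq0 x : dep x = 0 -> x = r.
Proof. by have [Hm _] := dep_spec x => E; rewrite E in Hm. Qed.

Lemma p_fix x : p x = x -> x = r.
Proof.
move=> E; have [Hm _] := dep_spec x; rewrite -Hm.
by elim: (dep x) => [|m IH] //=; rewrite -IH E.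
Qed.

Lemma dep_p x : x != r -> dep x = (dep (p x)).+1.
Proof.
move=> xr; have [H1 H2] := dep_spec x; have [H3 H4] := dep_spec (p x).
case E: (dep x) => [|d]; first by case/eqP: xr; apply: dep_eq0.
apply/eqP; rewrite eqn_leq; apply/andP; split.
  by rewrite -E; apply: H2; rewrite iterSr.
by rewrite ltnS H4 // -iterSr -E.
Qed.

Definition chld (v a : 'I_N) := (a != v) && (p a == v).

Lemma chld_dep v a : chld v a -> dep a = (dep v).+1.
Proof.
case/andP => av /eqP pa.
have ar : a != r.
  apply: contraNneq av => ar; rewrite -pa ar; have [-> _] := Ht; done.
by rewrite dep_p // pa.
Qed.

Lemma chld_uniq v w a : chld v a -> chld w a -> v = w.
Proof. by case/andP => _ /eqP <- /andP [_ /eqP]. Qed.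

Lemma tadj_chld v w : tadj p v w = chld w v || chld v w.
Proof. by rewrite /tadj /chld eq_sym andb_orr. Qed.

Lemma chld_asym v w : chld v w -> chld w v -> False.
Proof.
by move=> /chld_dep h1 /chld_dep; rewrite h1; lia.
Qed.

Lemma tdeg_chld v : tdeg p v = #|[set a | chld v a]| + (v != r).
Proof.
rewrite /tdeg.
have -> : [set y | tadj p v y] = [set y | chld v y] :|: [set y | chld y v].
  by apply/setP => y; rewrite !inE tadj_chld orbC.
rewrite cardsU.
have -> : [set y | chld v y] :&: [set y | chld y v] = set0.
  apply/setP => y; rewrite !inE; apply/negP => /andP [h1 h2].
  exact: chld_asym h1 h2.
rewrite cards0 subn0; congr (_ + _).
have [->|vr] := eqVneq v r.
  have [pr _] := Ht.
  have -> : [set y | chld y r] = set0.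
    by apply/setP => y; rewrite !inE /chld pr andNb.
  by rewrite cards0.
transitivity #|[set p v]|; last by rewrite cards1.
apply: eq_card => y; rewrite !inE /chld eq_sym.
have [<-|] := eqVneq (p v) y; last by rewrite andbF.
by rewrite andbT; apply: contraNneq vr => E; rewrite (p_fix E).
Qed.

End Tree.
Local Open Scope ring_scope.

Definition ccR (R : rcfType) (k : nat) (d : nat -> nat) (i : nat) : R :=
  if i == k then (d k)%:R else (d i)%:R - 1.

Fixpoint rho (R : rcfType) (k : nat) (d : nat -> nat) (alpha x : R) (j : nat) : R :=
  match j with
  | 0 => 1
  | j'.+1 => x - alpha * (d j'.+1)%:R
             - ccR R k d j'.+1 * (1 - alpha) ^+ 2 / rho k d alpha x j'
  end.

Lemma detT (R : rcfType) (k : nat) (d : nat -> nat) (alpha x : R) (j : nat) :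
  (2 <= k)%N -> (j <= k)%N -> d 1 = 1%N ->
  (forall s, (2 <= s <= k)%N -> 0 <= ccR R k d s) ->
  (forall i, (1 <= i <= j)%N -> rho k d alpha x i != 0) ->
  \det (x%:M - Tsub k d alpha j) = \prod_(i < j) rho k d alpha x i.+1.
Proof.
move=> k2 jk d1 cc0 rh0.
apply: (@det_tree _ _ _ (fun v a : 'I_j => a.+1 == v :> nat) (fun a => j - a)%N
   (fun a => - ((1 - alpha) * Num.sqrt (ccR R k d a.+2)))).
- by move=> v a /eqP E; have := ltn_ord v; lia.
- by move=> v w a /eqP h1 /eqP h2; apply: val_inj; rewrite /= -h1 -h2.
- by move=> v; apply: rh0; have := ltn_ord v; lia.
- move=> v w vw; rewrite !mxE (negbTE vw) mulr0n sub0r /Tentry.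
  have vw' : (v == w :> nat) = false by apply/negbTE.
  rewrite vw'.
  case E1: (w.+1 == v :> nat); case E2: (v.+1 == w :> nat).
  - by move: E1 E2 => /eqP E1 /eqP E2; lia.
  - rewrite (_ : (v == w.+1 :> nat) = true); last by rewrite eq_sym.
    rewrite /= (_ : (maxn v w).+1 = w.+2); last by move/eqP: E1; lia.
    by rewrite /ccR mul1r mul0r addr0.
  - rewrite (_ : (v == w.+1 :> nat) = false); last by rewrite eq_sym.
    rewrite (_ : (w == v.+1 :> nat) = true); last by rewrite eq_sym.
    rewrite /= (_ : (maxn v w).+1 = v.+2); last by move/eqP: E2; lia.
    by rewrite /ccR mul1r mul0r add0r.
  - rewrite (_ : (v == w.+1 :> nat) = false); last by rewrite eq_sym.
    rewrite (_ : (w == v.+1 :> nat) = false); last by rewrite eq_sym.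
    by rewrite /= !mul0r addr0 oppr0.
- move=> v; rewrite !mxE eqxx mulr1n /Tentry eqxx.
  case: v => [[|v] hv] /=.
    rewrite big_pred0; last by move=> a.
    rewrite addr0 /ccR (_ : (1 == k)%N = false); last by lia.
    by rewrite d1 subrr mul0r mul0r subr0 mulr1.
  have hv' : (v < j)%N by lia.
  rewrite (big_pred1 (Ordinal hv')); last by move=> a; rewrite /= eqSS.
  rewrite /= sqrrN exprMn sqr_sqrtr; last by apply: cc0; lia.
  rewrite -/(rho k d alpha x v.+1).
  by ring.
Qed.

Lemma chR (R : rcfType) N k (p : 'I_N -> 'I_N) r (d : nat -> nat) (alpha : R) :
  is_rooted_tree p r -> (forall v, (tdepth p r v < k)%N) ->
  (forall v, tdeg p v = d (k - tdepth p r v)%N) ->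
  forall v, (#|[set a | chld p v a]|)%:R = ccR R k d (k - tdepth p r v).
Proof.
move=> Ht hk hdeg v.
have := tdeg_chld Ht v; rewrite hdeg /ccR.
have [E|vr] := eqVneq v r.
  rewrite E dep_root // subn0 eqxx addn0 => <-; done.
have hd : tdepth p r v != 0%N by apply: contra_neq vr; apply: dep_eq0.
rewrite addn1 (_ : (k - tdepth p r v == k)%N = false); last first.
  by have := hk v; lia.
by move=> ->; rewrite -addn1 natrD addrK.
Qed.

Lemma detA (R : rcfType) N k (p : 'I_N -> 'I_N) r (d : nat -> nat) (alpha x : R) :
  is_rooted_tree p r -> (forall v, (tdepth p r v < k)%N) ->
  (forall v, tdeg p v = d (k - tdepth p r v)%N) ->
  (forall i, (1 <= i <= k)%N -> rho k d alpha x i != 0) ->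
  \det (x%:M - Aalpha p alpha) = \prod_v rho k d alpha x (k - tdepth p r v).
Proof.
move=> Ht hk hdeg hr.
apply: (@det_tree _ _ _ (chld p) (tdepth p r) (fun _ => - (1 - alpha))
   (fun v => rho k d alpha x (k - tdepth p r v))).
- by move=> v a /(chld_dep Ht) ->.
- exact: chld_uniq.
- by move=> v; apply: hr; have := hk v; lia.
- move=> v w vw; rewrite !mxE (negbTE vw) mulr0n sub0r mul0r mulr0 add0r.
  rewrite tadj_chld.
  case cwv: (chld p w v); case cvw: (chld p v w).
  + by case: (chld_asym Ht cvw cwv).
  + by rewrite /= !(mulr1n, mulr0n, mulr1, mul1r, mul0r, addr0, add0r).
  + by rewrite /= !(mulr1n, mulr0n, mulr1, mul1r, mul0r, addr0, add0r).
  + by rewrite /= !(mulr1n, mulr0n, mulr1, mul1r, mul0r, mulr0, addr0, add0r, oppr0).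
- move=> v; rewrite !mxE eqxx mulr1n mul1r /tadj eqxx /= mulr0 addr0.
  under eq_bigr => a /(chld_dep Ht) -> do rewrite sqrrN.
  rewrite (eq_bigl (fun a => a \in [set a | chld p v a])); last by move=> a; rewrite inE.
  rewrite sumr_const -[_ *+ #|_|]mulr_natl.
  have hch := @chR R N k p r d alpha Ht hk hdeg v.
  rewrite hch hdeg ?mulr1.
  have -> : (k - tdepth p r v = (k - tdepth p r v).-1.+1)%N by have := hk v; lia.
  rewrite /= -/(rho k d alpha x _) subnS.
  by ring.
Qed.

Lemma horner_char (F : fieldType) n (A : 'M[F]_n) x :
  (char_poly A).[x] = \det (x%:M - A).
Proof.
rewrite /char_poly -horner_evalE -det_map_mx; congr (\det _).
apply/matrixP => i j; rewrite !mxE rmorphB rmorphMn /= !horner_evalE hornerX; congr (_ - _); exact: hornerC.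
Qed.

Lemma mupX (F : fieldType) (x : F) (q : {poly F}) e : q != 0 ->
  mup x (q ^+ e) = (e * mup x q)%N.
Proof.
move=> q0; elim: e => [|e IH]; first by rewrite expr0 mul0n mupNroot // root1.
by rewrite exprS mupM ?expf_neq0 // IH mulSn.
Qed.

Lemma largest_root (R : rcfType) (q : {poly R}) :
  q != 0 -> (exists C, forall x, C <= x -> 0 < q.[x]) ->
  (forall x, 0 < q.[x]) \/ exists l, root q l /\ forall x, l < x -> 0 < q.[x].
Proof.
move=> q0 [C hC].
have [s hs] : exists s, (size q < s)%N by exists (size q).+1.
elim: s q hs q0 C hC => // s IH q hs q0 C hC.
case: (classic (exists c, root q c)) => [[c rc]|nr]; last first.
  left => x; rewrite ltNge; apply/negP => hx.
  have hxm : x <= Num.max x C by rewrite le_max lexx.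
  have hCm : C <= Num.max x C by rewrite le_max lexx orbT.
  have [y _ ry] := @poly_ivt R q x (Num.max x C) hxm
     (introT andP (conj hx (ltW (hC _ hCm)))).
  by case: nr; exists y.
case/factor_theorem: rc => q' Eq.
have q'0 : q' != 0 by apply: contraNneq q0 => E; rewrite Eq E mul0r.
have hs' : (size q' < s)%N.
  move: hs; rewrite Eq size_Mmonic ?monicXsubC // size_XsubC addn2 /=.
  by rewrite ltnS.
have hpos : exists C', forall x, C' <= x -> 0 < q'.[x].
  exists (Num.max C (c + 1)) => x; rewrite ge_max => /andP [h1 h2].
  have := hC x h1; rewrite Eq hornerM hornerXsubC pmulr_lgt0 //.
  by rewrite subr_gt0; apply: lt_le_trans h2; rewrite ltrDl ltr01.
have [C' hC'] := hpos.
case: (IH q' hs' q'0 C' hC') => [allpos | [l [rl hl]]].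
  right; exists c; split; first by rewrite Eq rootM root_XsubC eqxx orbT.
  by move=> x cx; rewrite Eq hornerM hornerXsubC mulr_gt0 // subr_gt0.
right; exists (Num.max c l); split.
  rewrite Eq rootM root_XsubC.
  have [hcl|hcl] := leP c l; first by rewrite rl.
  by rewrite eqxx orbT.
move=> x; rewrite gt_max => /andP [h1 h2].
by rewrite Eq hornerM hornerXsubC mulr_gt0 ?hl // subr_gt0.
Qed.

Lemma sturm (R : rcfType) (q : nat -> {poly R}) (a b : nat -> R) (m : nat) (C : R) :
  (1 <= m)%N ->
  q 0%N = 1 -> q 1%N = 'X - (a 1%N)%:P ->
  (forall j, (j.+2 <= m)%N ->
     q j.+2 = ('X - (a j.+2)%:P) * q j.+1 - (b j.+2)%:P * q j) ->
  (forall j, (j.+2 <= m)%N -> 0 < b j.+2) ->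
  (forall j x, (j <= m)%N -> C <= x -> 0 < (q j).[x]) ->
  exists l, root (q m) l /\ forall x, l < x -> forall j, (j <= m)%N -> 0 < (q j).[x].
Proof.
move=> m1 q0 q1 rec bpos pos.
suff H : forall j, (1 <= j <= m)%N -> exists l, root (q j) l /\
    (forall x, l < x -> forall i, (i <= j)%N -> 0 < (q i).[x]) /\
    (forall i, (i < j)%N -> 0 < (q i).[l]).
  have [l [h1 [h2 _]]] := H m (introT andP (conj m1 (leqnn m))).
  by exists l; split.
elim=> [|j IH]; first by case/andP; rewrite ltnn.
case/andP => _ hj.
case: j IH hj => [|j] IH hj.
  exists (a 1%N); split; first by rewrite q1 root_XsubC.
  split.
    move=> x lx [|[|i]] // _; first by rewrite q0 hornerC ltr01.
    by rewrite q1 hornerXsubC subr_gt0.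
  by move=> [|i] // _; rewrite q0 hornerC ltr01.
have [l [rl [hl hl']]] := IH (introT andP (conj (ltn0Sn j) (ltnW hj))).
have neg : (q j.+2).[l] < 0.
  rewrite rec // hornerD hornerN !hornerM hornerC (eqP rl) mulr0 sub0r oppr_lt0.
  by rewrite mulr_gt0 ?bpos ?hl'.
have qn0 : q j.+2 != 0.
  by apply: contraTneq neg => ->; rewrite horner0 ltxx.
case: (largest_root qn0 (ex_intro _ C (fun x hx => pos _ x hj hx))) =>
   [allp | [l' [rl' hl2]]].
  by have := allp l; rewrite ltNge (ltW neg).
have ll' : l < l'.
  rewrite ltNge; apply/negP; rewrite le_eqVlt => /orP [/eqP E | h].
    by move: neg; rewrite -E (eqP rl') ltxx.
  by have := hl2 _ h; rewrite ltNge (ltW neg).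
exists l'; split => //; split.
  move=> x lx i hi; case: (eqVneq i j.+2) => [->|ne]; first exact: hl2.
  by apply: hl; [apply: lt_trans lx | lia].
by move=> i hi; apply: hl => //; lia.
Qed.

Lemma prod_levels (F : comNzRingType) (I : finType) (lv : I -> nat) (rh : nat -> F)
  (n : nat -> nat) (k : nat) :
  (1 <= k)%N ->
  (forall v, (1 <= lv v <= k)%N) ->
  (forall m, (1 <= m <= k)%N -> #|[set v | lv v == m]| = n m) ->
  (forall m, (1 <= m < k)%N -> (n m.+1 <= n m)%N) -> n k = 1%N ->
  \prod_v rh (lv v) =
  \prod_(1 <= j < k) (\prod_(i < j) rh i.+1) ^+ (n j - n j.+1) * \prod_(i < k) rh i.+1.
Proof.
move=> k1 hlv hn hmono hnk.
have lvl m : (1 <= m <= k)%N -> \prod_(v | lv v == m) rh (lv v) = rh m ^+ n m.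
  move=> hm; rewrite (eq_bigr (fun _ => rh m)); last by move=> v /eqP ->.
  rewrite (eq_bigl (fun v => v \in [set v | lv v == m])); last by move=> v; rewrite inE.
  by rewrite prodr_const hn.
have step m : (1 <= m <= k)%N -> \prod_(v | (lv v <= m)%N) rh (lv v) =
   \prod_(1 <= j < m) (\prod_(i < j) rh i.+1) ^+ (n j - n j.+1) *
   (\prod_(i < m) rh i.+1) ^+ n m.
  elim: m => [|m IH]; first by case/andP.
  move=> /andP [_ hm].
  case: m IH hm => [|m] IH hm.
    rewrite big_geq // mul1r big_ord1 -lvl //.
    by apply: eq_bigl => v /=; have := hlv v; lia.
  rewrite (bigID (fun v => (lv v <= m.+1)%N)) /=.
  rewrite (eq_bigl (fun v => (lv v <= m.+1)%N)); last by move=> v; apply/andb_idl => /leqW.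
  rewrite [X in _ * X](eq_bigl (fun v => lv v == m.+2)); last by move=> v; rewrite -ltnNge eqn_leq.
  rewrite IH; last by lia.
  rewrite lvl; last by lia.
  rewrite [in RHS]big_nat_recr //= [X in _ = _ * X ^+ _]big_ord_recr /= exprMn -!mulrA; congr (_ * _).
  rewrite mulrA -exprD subnK //; apply: hmono; lia.
have hk : (1 <= k <= k)%N by rewrite k1 leqnn.
rewrite -[X in _ = _ * X]expr1 -[X in _ = _ * _ ^+ X]hnk -(step k hk).
by apply: eq_bigl => v; have := hlv v; lia.
Qed.

Lemma rho_ge1 (R : rcfType) k d (alpha x D : R) :
  0 <= alpha <= 1 ->
  (forall s, (1 <= s <= k)%N -> 0 <= ccR R k d s <= D) ->
  (forall s, (1 <= s <= k)%N -> (d s)%:R <= D) ->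
  1 + D + D <= x -> forall i, (i <= k)%N -> 1 <= rho k d alpha x i.
Proof.
move=> /andP [a0 a1] hc hd hx; elim => [|i IH] hi /=; first by rewrite lexx.
have r1 := IH (ltnW hi).
have /andP [c0 cD] : 0 <= ccR R k d i.+1 <= D by apply: hc; lia.
have dD : (d i.+1)%:R <= D by apply: hd; lia.
have t1 : alpha * (d i.+1)%:R <= D.
  by apply: le_trans dD; rewrite ler_piMl // ler0n.
have b2 : (1 - alpha) ^+ 2 <= 1 by nra.
have q : (1 - alpha) ^+ 2 / rho k d alpha x i <= 1.
  rewrite ler_pdivrMr ?mul1r; first exact: le_trans b2 r1.
  by apply: lt_le_trans r1; rewrite ltr01.
have t2 : ccR R k d i.+1 * (1 - alpha) ^+ 2 / rho k d alpha x i <= D.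
  by rewrite -mulrA; apply: le_trans cD; rewrite ler_piMr.
lra.
Qed.

Lemma mup_prod_pow (F : fieldType) (x : F) (Q : nat -> {poly F}) (e : nat -> nat)
  (a b : nat) : (forall j, Q j != 0) ->
  mup x (\prod_(a <= j < b) Q j ^+ e j) = (\sum_(a <= j < b) e j * mup x (Q j))%N /\
  \prod_(a <= j < b) Q j ^+ e j != 0.
Proof.
move=> hQ.
apply: (big_rec2 (fun s P => mup x P = s /\ P != 0)).
  by split; [rewrite mupNroot // root1 | rewrite oner_eq0].
move=> j s P _ [h1 h2]; split; last by rewrite mulf_neq0 ?expf_neq0.
by rewrite mupM ?expf_neq0 // mupX // h1.
Qed.

Section TreeMore.
Variables (N : nat) (p : 'I_N -> 'I_N) (r : 'I_N).
Hypothesis Ht : is_rooted_tree p r.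
Local Notation dep := (tdepth p r).

Lemma dep_iter v m : (m <= dep v)%N -> dep (iter m p v) = (dep v - m)%N.
Proof.
elim: m => [|m IH] hm; first by rewrite subn0.
rewrite iterS; set w := iter m p v.
have hw : dep w = (dep v - m)%N by apply: IH; lia.
have wr : w != r by apply: contraTneq hm => E; move: hw; rewrite E dep_root //; lia.
have := dep_p Ht wr; rewrite hw; lia.
Qed.

End TreeMore.

Lemma rhoS (R : rcfType) k d (alpha x : R) i :
  rho k d alpha x i.+1 = x - alpha * (d i.+1)%:R
             - ccR R k d i.+1 * (1 - alpha) ^+ 2 / rho k d alpha x i.
Proof. by []. Qed.

Lemma prodS (R : rcfType) (f : nat -> R) j :
  \prod_(i < j.+1) f i.+1 = (\prod_(i < j) f i.+1) * f j.+1.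
Proof. by rewrite big_ord_recr. Qed.

Theorem theorem6 (R : rcfType) (N k : nat) (p : 'I_N -> 'I_N) (r : 'I_N)
    (n d : nat -> nat) (alpha : R) :
  (2 <= k)%N ->
  is_rooted_tree p r ->
  (* exactly k levels *)
  (forall x, (tdepth p r x < k)%N) ->
  (exists x, tdepth p r x = k.-1) ->
  (* n_{k-j+1} = number of vertices at level j, i.e. at depth j-1 *)
  (forall i, (1 <= i <= k)%N -> n i = #|[set x | tdepth p r x == (k - i)%N]|) ->
  (* all vertices at the same level have the same degree, d_{k-j+1} *)
  (forall x, tdeg p x = d (k - tdepth p r x)%N) ->
  0 <= alpha < 1 ->
  (forall x : R,
     mup x (char_poly (Aalpha p alpha)) =
       (\sum_(1 <= j < k) (n j - n j.+1) * mup x (char_poly (Tsub k d alpha j))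
        + mup x (char_poly (Tsub k d alpha k)))%N)
  /\
  (exists lam : R,
     eigenvalue (Tsub k d alpha k) lam /\ eigenvalue (Aalpha p alpha) lam /\
     (forall mu, eigenvalue (Tsub k d alpha k) mu -> mu <= lam) /\
     (forall mu, eigenvalue (Aalpha p alpha) mu -> mu <= lam)).
Proof.
move=> k2 Ht hk [y hy] hn hdeg /andP [a0 a1].
have k1 : (1 <= k)%N by lia.
have rE v : (v == r) = (tdepth p r v == 0%N).
  by apply/eqP/eqP => [->|]; [exact: dep_root | exact: dep_eq0].
have anc t : (t < k)%N -> exists z, tdepth p r z = t.
  by move=> ht; exists (iter (k.-1 - t) p y); rewrite dep_iter // hy; lia.
have chn v : #|[set a | chld p v a]| = (d (k - tdepth p r v) - (v != r))%N.
  by rewrite -hdeg (tdeg_chld Ht) addnK.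
have has_child v : (tdepth p r v < k.-1)%N -> (0 < #|[set a | chld p v a]|)%N.
  move=> hv.
  set z' := iter (k.-1 - (tdepth p r v).+1) p y.
  have hz' : tdepth p r z' = (tdepth p r v).+1 by rewrite /z' dep_iter // hy; lia.
  have z'r : z' != r by rewrite rE hz'.
  have hz : tdepth p r (p z') = tdepth p r v.
    by have := dep_p Ht z'r; rewrite hz'; case.
  have : (0 < #|[set a | chld p (p z') a]|)%N.
    apply/card_gt0P; exists z'; rewrite inE /chld eqxx andbT.
    by apply/eqP => E; move/eqP: z'r; apply; apply: (p_fix Ht); rewrite -E.
  by rewrite !chn !rE hz.
have d1 : d 1 = 1%N.
  have yr : y != r by rewrite rE hy; lia.
  have h0 : #|[set a | chld p y a]| = 0%N.
    apply/eqP; rewrite cards_eq0; apply/eqP/setP => a; rewrite !inE.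
    by apply/negP => /(chld_dep Ht) h; have := hk a; rewrite h hy; lia.
  have := tdeg_chld Ht y; rewrite hdeg hy h0 yr (_ : (k - k.-1)%N = 1%N) //; lia.
have ccpos s : (2 <= s <= k)%N -> 0 < ccR R k d s.
  move=> hs; have [z hz] := anc (k - s)%N ltac:(lia).
  have := @chR R N k p r d alpha Ht hk hdeg z.
  rewrite hz (_ : (k - (k - s) = s)%N); last by lia.
  by move=> <-; rewrite ltr0n has_child // hz; lia.
have cc1 : ccR R k d 1 = 0.
  by rewrite /ccR (_ : (1 == k)%N = false) ?d1 ?subrr //; lia.
have cc0 s : (1 <= s <= k)%N -> 0 <= ccR R k d s.
  case: s => [|[|s]] hs //; first by rewrite cc1.
  by apply: ltW; apply: ccpos.
pose D : R := (\sum_(i < k.+1) d i)%:R.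
have dle s : (s <= k)%N -> (d s)%:R <= D.
  move=> hs; rewrite ler_nat (bigD1 (Ordinal (hs : (s < k.+1)%N))) //=.
  exact: leq_addr.
have ccle s : (1 <= s <= k)%N -> ccR R k d s <= D.
  move=> hs; rewrite /ccR; case: eqP => _; first exact: dle.
  have := dle s ltac:(lia); lra.
pose C : R := 1 + D + D.
have rge x : C <= x -> forall i, (i <= k)%N -> 1 <= rho k d alpha x i.
  move=> hx; apply: (@rho_ge1 R k d alpha x D) => //.
  - by rewrite a0 ltW.
  - by move=> s hs; rewrite cc0 //= ccle.
  - by move=> s hs; apply: dle; lia.
have rnz x : C <= x -> forall i, (1 <= i <= k)%N -> rho k d alpha x i != 0.
  move=> hx i hi; apply: lt0r_neq0; apply: lt_le_trans (rge x hx i _); first by rewrite ltr01.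
  by case/andP: hi.
pose q j := char_poly (Tsub k d alpha j).
have qeval x j : C <= x -> (j <= k)%N -> (q j).[x] = \prod_(i < j) rho k d alpha x i.+1.
  move=> hx hj; rewrite horner_char detT //.
  - by move=> s hs; apply: cc0; lia.
  - by move=> i hi; apply: rnz => //; lia.
have PA : char_poly (Aalpha p alpha) =
    \prod_(1 <= j < k) q j ^+ (n j - n j.+1) * q k.
  apply: (@poly_eq_ge _ _ _ C) => x hx.
  rewrite horner_char (detA Ht hk hdeg); last by apply: rnz.
  rewrite hornerM horner_prod qeval //.
  rewrite (eq_big_nat _ _ (F2 := fun j =>
     (\prod_(i < j) rho k d alpha x i.+1) ^+ (n j - n j.+1))); last first.
    by move=> j /andP [_ hj]; rewrite horner_exp qeval // ltnW.
  apply: (@prod_levels _ _ (fun v => k - tdepth p r v)%N) => //.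
  - by move=> v; have := hk v; lia.
  - move=> m hm; rewrite hn //; apply: eq_card => v; rewrite !inE.
    by have := hk v; lia.
  - move=> m hm; rewrite !hn; try lia.
    apply: leq_trans (leq_imset_card p [set v | tdepth p r v == (k - m)%N]).
    apply: subset_leq_card; apply/subsetP => v; rewrite inE => /eqP hv.
    have : (0 < #|[set a | chld p v a]|)%N by apply: has_child; lia.
    case/card_gt0P => a; rewrite inE => ha; apply/imsetP; exists a.
      by rewrite inE (chld_dep Ht ha) hv; apply/eqP; lia.
    by case/andP: ha => _ /eqP.
  - rewrite hn ?subnn; last by lia.
    rewrite -(cards1 r); apply: eq_card => v; rewrite !inE rE.
    done.
have qnz j : q j != 0 by apply: monic_neq0; apply: char_poly_monic.
split.
  move=> x; rewrite PA mupM ?qnz //; last first.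
    by have [_ ->] := @mup_prod_pow R x q (fun j => n j - n j.+1)%N 1 k qnz.
  by have [-> _] := @mup_prod_pow R x q (fun j => n j - n j.+1)%N 1 k qnz.
have q0 : q 0%N = 1 by rewrite /q /char_poly det_mx00.
have q1 : q 1%N = 'X - (alpha * (d 1%N)%:R)%:P.
  apply: (@poly_eq_ge _ _ _ C) => x hx.
  rewrite qeval // big_ord1 hornerXsubC /= cc1 !mul0r subr0.
  by rewrite d1.
have qrec j : (j.+2 <= k)%N -> q j.+2 = ('X - (alpha * (d j.+2)%:R)%:P) * q j.+1
     - (ccR R k d j.+2 * (1 - alpha) ^+ 2)%:P * q j.
  move=> hj; apply: (@poly_eq_ge _ _ _ C) => x hx.
  rewrite hornerD hornerN !hornerM hornerXsubC !hornerC !qeval //; try lia.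
  rewrite !prodS (rhoS _ _ _ _ j.+1).
  have := rnz x hx j.+1 ltac:(lia).
  set r1 := rho k d alpha x j.+1; set P := \prod_(i < j) _.
  by move=> h1; field.
have qpos j x : (j <= k)%N -> C <= x -> 0 < (q j).[x].
  move=> hj hx; rewrite qeval //; apply: prodr_gt0 => i _.
  by apply: lt_le_trans (rge x hx i.+1 _); [rewrite ltr01 | have := ltn_ord i; lia].
have bpos j : (j.+2 <= k)%N -> 0 < ccR R k d j.+2 * (1 - alpha) ^+ 2.
  by move=> hj; rewrite mulr_gt0 ?exprn_gt0 ?subr_gt0 // ccpos //; lia.
have [l [rl hl]] := @sturm R q (fun j => alpha * (d j)%:R)
   (fun j => ccR R k d j * (1 - alpha) ^+ 2) k C k1 q0 q1 qrec bpos qpos.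
have leroot j mu : (j <= k)%N -> root (q j) mu -> mu <= l.
  move=> hj rmu; rewrite leNgt; apply/negP => h.
  by have := hl mu h j hj; rewrite (eqP rmu) ltxx.
have leA mu : root (char_poly (Aalpha p alpha)) mu -> mu <= l.
  rewrite PA rootM => /orP [h|h]; last exact: (leroot k).
  move: h; rewrite /root horner_prod prodf_seq_eq0 => /hasP [j].
  rewrite mem_index_iota => /andP [_ hj] /andP [_].
  rewrite horner_exp expf_eq0 => /andP [_ h].
  exact: (leroot j mu (ltnW hj)).
exists l; split; first by rewrite eigenvalue_root_char.
split; first by rewrite eigenvalue_root_char PA rootM rl orbT.
split.
  by move=> mu; rewrite eigenvalue_root_char; apply: leroot.
by move=> mu; rewrite eigenvalue_root_char; apply: leA.
Qed.
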